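(* In the Maker–Breaker game on the infinite grid whose winning sets are all isomorphic copies of the polyomino Snaky, Breaker has no winning pairing strategy; i.e., there is no family of pairwise disjoint 2-element subsets of $\mathbb Z^2$ such that every isomorphic copy of Snaky contains one of these pairs.
   Context: Cells of the infinite square grid are identified with their lower-left lattice points $(x,y)\in\mathbb Z^2$. Snaky is the hexomino $S=\{(0,1),(1,1),(1,0),(2,0),(3,0),(4,0)\}$ (two ''head'' cells above a ''body'' of four consecutive cells, the head overlapping the first body cell and protruding one cell beyond it). An isomorphic copy of Snaky is the image of $S$ under a composition of a translation with one of the 8 rotations/reflections of the square grid. In the Maker–Breaker game the players alternately take cells; Maker wins by owning all cells of some winning set. *)

(* Defs.v *)
From Stdlib Require Import ZArith List.
Import ListNotations.
Open Scope Z_scope.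

Definition cell : Type := (Z * Z)%type.

Definition snaky : list cell :=
  [(0,1); (1,1); (1,0); (2,0); (3,0); (4,0)].

(* The 8 rotations/reflections of the square grid (the dihedral group D4 acting
   linearly on Z^2): optionally swap coordinates, then optionally negate each. *)
Definition grid_sym (swap neg1 neg2 : bool) (p : cell) : cell :=
  let q := if swap then (snd p, fst p) else p in
  ((if neg1 then - fst q else fst q), (if neg2 then - snd q else snd q)).

Definition in_copy (swap neg1 neg2 : bool) (t : cell) (z : cell) : Prop :=
  exists s, In s snaky /\
    z = (fst t + fst (grid_sym swap neg1 neg2 s),
         snd t + snd (grid_sym swap neg1 neg2 s)).

Definition two_element (A : cell -> Prop) : Prop :=
  exists a b, a <> b /\ forall z, A z <-> (z = a \/ z = b).

(* A pairing: a family of pairwise disjoint 2-element subsets of Z^2.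
   Two members of the family that are distinct (as sets) share no element;
   equivalently, members sharing an element are the same set. *)
Definition pairing (F : (cell -> Prop) -> Prop) : Prop :=
  (forall A, F A -> two_element A) /\
  (forall A B, F A -> F B -> (exists z, A z /\ B z) -> forall z, A z <-> B z).

Definition pairing_strategy (F : (cell -> Prop) -> Prop) : Prop :=
  pairing F /\
  forall (swap neg1 neg2 : bool) (t : cell),
    exists A, F A /\ forall z, A z -> in_copy swap neg1 neg2 t z.

(* Main.v *)
Require Import Defs.
From Stdlib Require Import ZArith List Bool.
Import ListNotations.
Open Scope Z_scope.

Definition cpy (k : bool*bool*bool*cell) : list cell :=
  let '(sw,n1,n2,t) := k in
  map (fun s => (fst t + fst (grid_sym sw n1 n2 s), snd t + snd (grid_sym sw n1 n2 s))) snaky.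

Lemma in_copy_cpy sw n1 n2 t z : in_copy sw n1 n2 t z -> In z (cpy (sw,n1,n2,t)).
Proof. intros [s [Hs ->]]. unfold cpy. apply (proj2 (in_map_iff _ _ _)). exists s; auto. Qed.

Definition eqc (a b : cell) : bool := Z.eqb (fst a) (fst b) && Z.eqb (snd a) (snd b).
Lemma eqc_spec a b : eqc a b = true <-> a = b.
Proof. destruct a, b; unfold eqc; simpl. rewrite andb_true_iff, !Z.eqb_eq.
  split; [intros [-> ->]; auto | intros H; inversion H; auto]. Qed.

Definition memb (z : cell) (l : list cell) : bool := existsb (eqc z) l.
Lemma memb_spec z l : memb z l = true <-> In z l.
Proof. unfold memb. rewrite existsb_exists. split.
  - intros [x [Hx He]]. apply eqc_spec in He. subst; auto.
  - intros H; exists z; split; auto. apply eqc_spec; auto. Qed.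

Fixpoint pairs (l : list cell) : list (cell*cell) :=
  match l with [] => [] | a :: r => map (fun b => (a,b)) r ++ pairs r end.

Lemma pairs_in a b l : In a l -> In b l -> a <> b ->
  In (a,b) (pairs l) \/ In (b,a) (pairs l).
Proof.
  induction l as [|x r IH]; simpl; [tauto|].
  intros Ha Hb Hab. rewrite !in_app_iff, !in_map_iff.
  destruct Ha as [<-|Ha]; destruct Hb as [<-|Hb].
  - congruence.
  - left; left; exists b; auto.
  - right; left; exists a; auto.
  - destruct (IH Ha Hb Hab); auto.
Qed.

Definition st := (list cell * list (cell*cell))%type.

Fixpoint best (c : st) (rest : list st) : st :=
  match rest with
  | [] => c
  | d :: r => if Nat.ltb (length (snd d)) (length (snd c)) then best d r else best c r
  end.

Lemma best_in c r : In (best c r) (c :: r).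
Proof.
  revert c; induction r as [|d r IH]; intros c; simpl; [auto|].
  destruct (Nat.ltb _ _).
  - specialize (IH d). simpl in IH. tauto.
  - specialize (IH c). simpl in IH. tauto.
Qed.

Definition untouch (a b : cell) (xy : cell*cell) : bool :=
  negb (eqc (fst xy) a || eqc (snd xy) a || eqc (fst xy) b || eqc (snd xy) b).

Definition step (e : cell*cell) (rem : list st) : list st :=
  map (fun ce => (fst ce, filter (untouch (fst e) (snd e)) (snd ce)))
    (filter (fun ce => negb (memb (fst e) (fst ce) && memb (snd e) (fst ce))) rem).

Fixpoint tryall (k : cell*cell -> bool) (es : list (cell*cell)) : bool :=
  match es with [] => false | e :: es' => if k e then true else tryall k es' end.

Lemma tryall_false k es e : tryall k es = false -> In e es -> k e = false.
Proof.
  induction es as [|x es IH]; simpl; [tauto|].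
  destruct (k x) eqn:Hx; [discriminate|]. intros H [<-|Hi]; auto.
Qed.

Fixpoint srch (fuel : nat) (rem : list st) : bool :=
  match fuel with
  | O => true
  | S f =>
    match rem with
    | [] => true
    | r0 :: rs =>
      tryall (fun e => srch f (step e rem)) (snd (best r0 rs))
    end
  end.

Definition params : list (bool*bool*bool*cell) := [(false,false,false,(0,2)); (false,false,false,(1,0)); (false,false,false,(1,3)); (false,false,false,(0,1)); (false,false,false,(1,2)); (false,false,false,(0,4)); (false,false,false,(0,0)); (false,false,false,(1,1)); (false,false,false,(0,3)); (false,false,false,(1,4)); (false,false,true,(0,2)); (false,false,true,(0,5)); (false,false,true,(1,3)); (false,false,true,(0,1)); (false,false,true,(1,2)); (false,false,true,(0,4)); (false,false,true,(1,5)); (false,false,true,(1,1)); (false,false,true,(0,3)); (false,false,true,(1,4)); (false,true,false,(4,0)); (false,true,false,(4,3)); (false,true,false,(5,4)); (false,true,false,(5,1)); (false,true,false,(4,2)); (false,true,false,(5,0)); (false,true,false,(5,3)); (false,true,false,(4,1)); (false,true,false,(5,2)); (false,true,false,(4,4)); (false,true,true,(4,3)); (false,true,true,(5,4)); (false,true,true,(5,1)); (false,true,true,(4,2)); (false,true,true,(4,5)); (false,true,true,(5,3)); (false,true,true,(4,1)); (false,true,true,(5,2)); (false,true,true,(4,4)); (false,true,true,(5,5)); (true,false,false,(4,0)); (true,false,false,(3,1)); (true,false,false,(1,0)); (true,false,false,(3,0)); (true,false,false,(0,1)); (true,false,false,(2,1)); (true,false,false,(4,1)); (true,false,false,(0,0));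 (true,false,false,(1,1)); (true,false,false,(2,0)); (true,false,true,(3,4)); (true,false,true,(0,5)); (true,false,true,(2,5)); (true,false,true,(4,5)); (true,false,true,(2,4)); (true,false,true,(0,4)); (true,false,true,(1,5)); (true,false,true,(3,5)); (true,false,true,(4,4)); (true,false,true,(1,4)); (true,true,false,(4,0)); (true,true,false,(3,1)); (true,true,false,(5,1)); (true,true,false,(1,0)); (true,true,false,(3,0)); (true,true,false,(5,0)); (true,true,false,(2,1)); (true,true,false,(4,1)); (true,true,false,(1,1)); (true,true,false,(2,0)); (true,true,true,(3,4)); (true,true,true,(5,4)); (true,true,true,(2,5)); (true,true,true,(4,5)); (true,true,true,(2,4)); (true,true,true,(1,5)); (true,true,true,(3,5)); (true,true,true,(4,4)); (true,true,true,(5,5)); (true,true,true,(1,4))].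

Definition cs := map cpy params.
Definition rem0 : list st := map (fun c => (c, pairs c)) cs.

Lemma srch_rem0 : srch 100 rem0 = false.
Proof. vm_cast_no_check (@eq_refl bool false). Qed.

Definition real (F : (cell -> Prop) -> Prop) (c : list cell) : Prop :=
  exists A, F A /\ (forall z, A z -> In z c).

Definition good (F : (cell -> Prop) -> Prop) (M : list (cell*cell)) : Prop :=
  forall e, In e M -> exists B, F B /\ B (fst e) /\ B (snd e).

Definition untouched (M : list (cell*cell)) (a : cell) : Prop :=
  forall e, In e M -> fst e <> a /\ snd e <> a.

Definition Inv (F : (cell -> Prop) -> Prop) (M : list (cell*cell)) (rem : list st) : Prop :=
  forall c es, In (c, es) rem ->
    real F c /\
    (forall e, In e M -> ~ (In (fst e) c /\ In (snd e) c)) /\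
    (forall a b, In a c -> In b c -> a <> b -> untouched M a -> untouched M b ->
       In (a,b) es \/ In (b,a) es).

Lemma eqc_false a b : a <> b -> eqc a b = false.
Proof. intros H. destruct (eqc a b) eqn:E; auto. apply eqc_spec in E. contradiction. Qed.

Lemma sound F (HF : pairing F) : forall fuel rem M,
  good F M -> Inv F M rem -> srch fuel rem = false -> False.
Proof.
  induction fuel as [|f IH]; intros rem M HG HI H; simpl in H; [discriminate|].
  destruct rem as [|r0 rs]; [discriminate|].
  pose proof (best_in r0 rs) as Hin.
  destruct (best r0 rs) as [c es] eqn:Eb. simpl in H.
  destruct (HI c es Hin) as [[A [FA HA]] [Hcov Hed]].
  destruct HF as [H2 Hdis].
  destruct (H2 A FA) as [p [q [Hpq HAi]]].
  assert (Ap : A p) by (apply HAi; auto).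
  assert (Aq : A q) by (apply HAi; auto).
  assert (Hun : forall z, A z -> untouched M z).
  { intros z Az e He. destruct (HG e He) as [B [FB [B1 B2]]].
    assert (K : forall w, B w -> w = z -> False).
    { intros w Bw Ew. subst w.
      assert (HAB := Hdis A B FA FB (ex_intro _ z (conj Az Bw))).
      apply (Hcov e He). split; apply HA; apply HAB; auto. }
    split; intro E; [exact (K _ B1 E) | exact (K _ B2 E)]. }
  assert (Hgen : forall e, In e es -> A (fst e) -> A (snd e) -> False).
  { intros e He Ae1 Ae2.
    apply (IH (step e (r0 :: rs)) (e :: M)).
    - intros e' [<-|He']; [exists A; auto | apply HG; auto].
    - intros c' es' Hin'. unfold step in Hin'.
      apply in_map_iff in Hin'. destruct Hin' as [[c0 es0] [Heq Hf]].
      simpl in Heq. inversion Heq; subst c0 es'; clear Heq.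
      apply filter_In in Hf. destruct Hf as [Hr Hm].
      destruct (HI c' es0 Hr) as [Hre [Hc He0]].
      split; [exact Hre|]. split.
      + intros e' [<-|He'].
        * intros [X1 X2]. apply memb_spec in X1. apply memb_spec in X2.
          simpl in Hm. rewrite X1, X2 in Hm. discriminate.
        * apply Hc; auto.
      + intros a b Ha Hb Hab Ua Ub.
        assert (UaM : untouched M a) by (intros e' He'; apply Ua; right; auto).
        assert (UbM : untouched M b) by (intros e' He'; apply Ub; right; auto).
        destruct (Ua e (or_introl eq_refl)) as [Ua1 Ua2].
        destruct (Ub e (or_introl eq_refl)) as [Ub1 Ub2].
        assert (T1 : untouch (fst e) (snd e) (a,b) = true).
        { unfold untouch; simpl. rewrite !eqc_false; auto. }
        assert (T2 : untouch (fst e) (snd e) (b,a) = true).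
        { unfold untouch; simpl. rewrite !eqc_false; auto. }
        destruct (He0 a b Ha Hb Hab UaM UbM) as [X|X]; [left|right];
          apply filter_In; split; auto.
    - exact (tryall_false _ _ _ H He). }
  assert (Hp : In p c) by (apply HA; auto).
  assert (Hq : In q c) by (apply HA; auto).
  destruct (Hed p q Hp Hq Hpq (Hun p Ap) (Hun q Aq)) as [X|X].
  - exact (Hgen _ X Ap Aq).
  - exact (Hgen _ X Aq Ap).
Qed.

Theorem theorem8 : ~ exists F : (cell -> Prop) -> Prop, pairing_strategy F.
Proof.
  intros [F [HF Hs]].
  apply (sound F HF 100 rem0 []); [intros e []| |exact srch_rem0].
  intros c es Hin. unfold rem0 in Hin. apply in_map_iff in Hin.
  destruct Hin as [c0 [Heq Hc]]. inversion Heq; subst c0 es; clear Heq.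
  unfold cs in Hc. apply in_map_iff in Hc. destruct Hc as [[[[sw n1] n2] t] [<- _]].
  split; [|split].
  - destruct (Hs sw n1 n2 t) as [A [FA HA]]. exists A; split; auto.
    intros z Az. apply in_copy_cpy. auto.
  - intros e [].
  - intros a b Ha Hb Hab _ _. apply pairs_in; auto.
Qed.
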